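(* Let $D\ge1$, $q\ge2$, consider the Hamming scheme $\mathrm H(D,q)$ on $X=\mathcal Q^D$, and let $x=(0,\dots,0)$. Let $Y\subseteq X$ with $1<|Y|<|X|$, $\chi=\chi_Y$, $\delta_x=\delta_x(\chi)$, $\delta^*=\delta^*(\chi)$. Suppose $t\in\{1,\dots,D\}$ is such that for every $1\le r\le t$ at least one of $$|\{r\le j\le D-r:E_j\chi\ne0\}|\le\delta_x-r,\qquad |\{r\le i\le D-r:E_i^*(x)\chi\ne0\}|\le\delta^*-r$$ holds. Then for every $0\le k\le D$, the number of words $y\in Y$ of Hamming weight $k$ whose support is disjoint from a given $t$-subset $S\subseteq\{1,\dots,D\}$ does not depend on $S$; consequently, the supports of the words of weight $k$ in $Y$ (counted with multiplicity) form a $t$-design on the point set $\{1,\dots,D\}$ (whenever there is at least one such word). In particular this holds without assuming $Y$ is linear.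
   Context: $\mathcal Q=\{0,\dots,q-1\}$. The Hamming scheme $\mathrm H(D,q)$ has relations $R_i=\{(u,v):u,v\text{ differ in exactly }i\text{ coordinates}\}$, associate matrices $A_i$, and primitive idempotents $E_0=|X|^{-1}J,E_1,\dots,E_D$ in the standard (Krawtchouk) cometric ordering. $V=\mathbb C^X$, $\chi_Y=\sum_{y\in Y}\hat y$. $E_i^*(x)$ is the diagonal matrix with $(E_i^*(x))_{yy}=1$ if $y$ differs from $x$ in exactly $i$ coordinates and $0$ otherwise. $\delta_x(\chi)=\min\{i\ne0:E_i^*(x)\chi\ne0\}$, $\delta^*(\chi)=\min\{j\ne0:E_j\chi\ne0\}$. The support of a word is the set of its nonzero coordinates. A (multiset) family of $k$-subsets of a $D$-set is a $t$-design if every $t$-subset is contained in the same number of members. *)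

(* Defs.v *)
From mathcomp Require Import all_boot all_order all_algebra all_field.
Set Implicit Arguments. Unset Strict Implicit. Unset Printing Implicit Defensive.
Import Order.TTheory GRing.Theory Num.Theory.
Local Open Scope ring_scope.

Definition word (D q : nat) := {ffun 'I_D -> 'I_q}.

Definition hdist D q (u v : word D q) : nat := #|[set i | u i != v i]|.

Definition wsupp D q (u : word D q) : {set 'I_D} := [set i | val (u i) != 0%N].
Definition hwt D q (u : word D q) : nat := #|wsupp u|.

Definition vec D q := word D q -> algC.
Definition mat D q := word D q -> word D q -> algC.
Definition mxv D q (M : mat D q) (v : vec D q) : vec D q :=
  fun u => \sum_(w : word D q) M u w * v w.
Definition nonzero D q (v : vec D q) : bool := [exists u, v u != 0].

Definition assoc D q (i : nat) : mat D q := fun u v => ((hdist u v == i)%:R : algC).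

Definition kraw (D q j i : nat) : algC :=
  \sum_(h < j.+1) (-1) ^+ h * (q - 1)%:R ^+ (j - h) * ('C(i, h))%:R * ('C(D - i, j - h))%:R.

(* primitive idempotents in the standard (Krawtchouk) cometric ordering:
   E_j = |X|^{-1} sum_i K_j(i) A_i *)
Definition Eidem D q (j : nat) : mat D q :=
  fun u v => (#|[set: word D q]|%:R)^-1 * \sum_(i < D.+1) kraw D q j i * @assoc D q i u v.

Definition Estar D q (i : nat) (x : word D q) : mat D q :=
  fun u v => ((u == v) && (hdist x u == i))%:R.

Definition chiv D q (Y : {set word D q}) : vec D q := fun y => ((y \in Y)%:R : algC).

(* delta_x(chi) = min { i <> 0 : E_i^*(x) chi <> 0 }   (default D+1 if empty) *)
Definition delta_x D q (x : word D q) (chi : vec D q) : nat :=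
  head D.+1 [seq i <- iota 1 D | nonzero (mxv (Estar i x) chi)].

(* delta^*(chi) = min { j <> 0 : E_j chi <> 0 }   (default D+1 if empty) *)
Definition delta_star D q (chi : vec D q) : nat :=
  head D.+1 [seq j <- iota 1 D | nonzero (mxv (@Eidem D q j) chi)].

(* Main.v *)
Require Import Defs.
From mathcomp Require Import all_boot all_order all_algebra all_field.
From mathcomp Require Import ring zify.
Import Order.TTheory GRing.Theory Num.Theory.
Set Implicit Arguments. Unset Strict Implicit. Unset Printing Implicit Defensive.
Local Open Scope ring_scope.

Lemma binid (i u : nat) : ('C(i, u) * i = u.+1 * 'C(i, u.+1) + u * 'C(i, u))%N.
Proof.
rewrite mul_bin_left.
case: (leqP u i) => [le|lt].
  by rewrite -mulnDl subnK // mulnC.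
by rewrite bin_small // !muln0.
Qed.

Lemma SL (k N : nat) (x : nat -> algC) :
  (#|[set i : 'I_N.+1 | x i != 0%R]| <= k)%N ->
  (forall u, (u < k)%N -> \sum_(i < N.+1) 'C(i, u)%:R * x i = 0) ->
  forall i, (i <= N)%N -> x i = 0.
Proof.
elim: k x => [|k IH] x Hc Hm i Hi.
  move: Hc; rewrite leqn0 cards_eq0 => /eqP H.
  have : (Ordinal (Hi : (i < N.+1)%N)) \notin [set i : 'I_N.+1 | x i != 0].
    by rewrite H in_set0.
  by rewrite inE negbK => /eqP.
case: (boolP [exists a : 'I_N.+1, x a != 0]); last first.
  rewrite negb_exists => /forallP H.
  by have := H (Ordinal (Hi : (i < N.+1)%N)); rewrite negbK => /eqP.
move=> /existsP [a Ha]; exfalso.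
pose x' := fun i : nat => (i%:R - (a : nat)%:R) * x i.
have Hc' : (#|[set i : 'I_N.+1 | x' i != 0%R]| <= k)%N.
  have Sub : [set i : 'I_N.+1 | x' i != 0] \subset [set i : 'I_N.+1 | x i != 0] :\ a.
    apply/subsetP => j; rewrite !inE /x' mulf_eq0 negb_or => /andP [H1 H2].
    rewrite H2 andbT; apply: contra H1 => /eqP ->; by rewrite subrr.
  apply: leq_trans (subset_leq_card Sub) _.
  move: Hc; rewrite (cardsD1 a) inE Ha /= add1n ltnS //.
have Hm' : forall u, (u < k)%N -> \sum_(i < N.+1) 'C(i, u)%:R * x' i = 0.
  move=> u Hu.
  have E : forall i : 'I_N.+1, 'C(i, u)%:R * x' i =
     u.+1%:R * ('C(i, u.+1)%:R * x i) + (u%:R - (a:nat)%:R) * ('C(i, u)%:R * x i).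
    move=> j; have B := congr1 (fun n => n%:R : algC) (binid j u).
    rewrite /= natrD !natrM in B; rewrite /x'.
    transitivity (('C(j, u)%:R * (j:nat)%:R) * x j - (a:nat)%:R * ('C(j, u)%:R * x j)); first by ring.
    rewrite B; ring.
  rewrite (eq_bigr _ (fun j _ => E j)) big_split /= -!mulr_sumr.
  by rewrite Hm // Hm ?(ltn_trans Hu) // !mulr0 addr0.
have Z := IH x' Hc' Hm'.
have Z' : forall j : 'I_N.+1, j != a -> x j = 0.
  move=> j Hj; have := Z j (ltn_ord j); rewrite /x' => /eqP.
  rewrite mulf_eq0 subr_eq0 eqr_nat => /orP [H|/eqP //].
  by move: Hj; rewrite -(inj_eq val_inj) H.
have := Hm 0%N (ltn0Sn k).
rewrite (bigD1 a) //= big1 ?addr0 => [|j Hj]; last by rewrite Z' // mulr0.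
by rewrite bin0 mul1r => /eqP; rewrite (negbTE Ha).
Qed.

Definition mq (q : nat) : algC := (q - 1)%:R.
Definition Ap q : {poly algC} := 1 + mq q *: 'X.
Definition Pk q N i : {poly algC} := Ap q ^+ (N - i) * (1 - 'X) ^+ i.
Definition Kk q N j i : algC := (Pk q N i)`_j.

Lemma qE q : (1 <= q)%N -> (q%:R : algC) = mq q + 1.
Proof. by move=> h; rewrite /mq natr1 subn1 prednK. Qed.

Lemma size_Ap q : (size (Ap q) <= 2)%N.
Proof.
rewrite /Ap; apply: leq_trans (size_polyD _ _) _.
rewrite geq_max size_polyC; apply/andP; split; first by case: (_ != _).
by apply: leq_trans (size_scale_leq _ _) _; rewrite size_polyX.
Qed.

Lemma size_1X : (size ((1 - 'X)%R : {poly algC}) <= 2)%N.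
Proof.
apply: leq_trans (size_polyD _ _) _.
rewrite geq_max size_polyC size_polyN size_polyX; by case: (_ != _).
Qed.

Lemma size_pow2 (p : {poly algC}) n : (size p <= 2)%N -> (size (p ^+ n) <= n.+1)%N.
Proof.
move=> h; apply: leq_trans (size_poly_exp_leq _ _) _.
rewrite ltnS; have : ((size p).-1 <= 1)%N by rewrite -ltnS; case: (size p) h => //= n0 h; lia.
move=> h1; by rewrite -{2}(mul1n n) leq_mul2r h1 orbT.
Qed.

Lemma size_Pk q N i : (i <= N)%N -> (size (Pk q N i) <= N.+1)%N.
Proof.
move=> hi; apply: leq_trans (size_polyMleq _ _) _.
have h1 := size_pow2 (N - i) (size_Ap q).
have h2 := size_pow2 i size_1X.
move: h1 h2; set a := size _; set b := size _ => h1 h2.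
case: a h1 => [|a] h1 /=; first by lia.
lia.
Qed.

Lemma Kk_big q N j i : (i <= N)%N -> (N < j)%N -> Kk q N j i = 0.
Proof. by move=> hi hj; rewrite /Kk nth_default // (leq_trans (size_Pk q hi)). Qed.

Definition Tk q N j u : algC :=
  (- (q%:R)) ^+ u * (if (j < u)%N then 0 else (Ap q ^+ (N - u))`_(j - u)).

Lemma Pk_tri q N i : (1 <= q)%N -> (i <= N)%N ->
  Pk q N i = \sum_(u < i.+1) ('C(i, u)%:R * (- (q%:R)) ^+ u) *: ('X^u * Ap q ^+ (N - u)).
Proof.
move=> hq hi.
have E1 : (1 - 'X : {poly algC}) = Ap q + (- (q%:R)) *: 'X.
  rewrite /Ap qE // scaleNr scalerDl scale1r opprD.
  by rewrite addrA addrK.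
rewrite /Pk E1; set A := Ap q; rewrite [(A + _) ^+ _]exprDn mulr_sumr; apply: eq_bigr => u _.
have hu : (u <= i)%N by rewrite -ltnS.
rewrite exprZn mulrnAr mulrA -exprD.
have -> : (N - i + (i - u) = N - u)%N by lia.
by rewrite -scalerAr (mulrC (A ^+ _)) scalerMnl mulr_natl.
Qed.

Lemma K_tri q N j i : (1 <= q)%N -> (i <= N)%N ->
  Kk q N j i = \sum_(u < N.+1) 'C(i, u)%:R * Tk q N j u.
Proof.
move=> hq hi; rewrite /Kk Pk_tri // coef_sum.
under eq_bigr => u _ do rewrite coefZ coefXnM -mulrA.
rewrite (big_ord_widen N.+1 (fun u => 'C(i, u)%:R * Tk q N j u)) ?ltnS //.
rewrite big_mkcond /=; apply: eq_bigr => u _.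
by case: ifP => // h; rewrite bin_small ?mul0r //; lia.
Qed.

Lemma Tk_diag q N j : Tk q N j j = (- (q%:R)) ^+ j.
Proof.
rewrite /Tk ltnn subnn.
have -> : (Ap q ^+ (N - j))`_0 = 1.
  elim: (N - j)%N => [|n IH]; first by rewrite expr0 coefC.
  by rewrite exprS coef0M IH mulr1 /Ap coefD coefC coefZ coefX mulr0 addr0.
by rewrite mulr1.
Qed.

Lemma Tk_up q N j u : (j < u)%N -> Tk q N j u = 0.
Proof. by move=> h; rewrite /Tk h mulr0. Qed.

Lemma coefXD1 j u : ((('X + 1) ^+ j : {poly algC}))`_u = 'C(j, u)%:R.
Proof.
rewrite exprD1n coef_sum.
under eq_bigr => k _ do rewrite coefMn coefXn.
case: (ltnP u j.+1) => h.
  rewrite (bigD1 (Ordinal h)) //= eqxx big1 ?addr0 => [|k hk]; first by [].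
  have hk' : (u == k) = false by apply/eqP => e; move/eqP: hk; apply; apply: val_inj; rewrite /= e.
  by rewrite hk' mul0rn.
rewrite bin_small // big1 // => k _.
have : (u != k) by apply/eqP => e; move: (ltn_ord k); rewrite -e; lia.
by move/negbTE ->; rewrite mul0rn.
Qed.

Lemma K_mom q N u i : (u < i)%N -> (i <= N)%N ->
  \sum_(j < N.+1) 'C(j, u)%:R * Kk q N j i = 0.
Proof.
move=> hu hi.
have E : \sum_(j < N.+1) 'C(j, u)%:R * Kk q N j i = (Pk q N i \Po ('X + 1))`_u.
  symmetry; rewrite coef_comp_poly.
  rewrite (big_ord_widen N.+1 (fun j => (Pk q N i)`_j * (('X + 1) ^+ j)`_u)) ?size_Pk //.
  rewrite big_mkcond /=; apply: eq_bigr => j _.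
  rewrite coefXD1 /Kk mulrC; case: ifP => // h.
  by rewrite nth_default ?mulr0 //; rewrite leqNgt h.
rewrite E /Pk rmorphM !rmorphXn /= /Ap rmorphB rmorphD /= comp_polyX comp_polyC.
rewrite linearZ /= comp_polyX.
have -> : (1%:P - ('X + 1) : {poly algC}) = - 'X by rewrite opprD addrCA subrr addr0.
by rewrite exprNn mulrA coefMXn hu.
Qed.

Lemma Pk_gen q n d i : (1 <= q)%N -> (d <= i)%N -> (i + d <= n)%N ->
  \sum_(e < d.+1) ('C(d, e)%:R * mq q ^+ (d - e)) *: Pk q (n - d) (i - e)
  = (q%:R ^+ d) *: Pk q (n - d - d) (i - d).
Proof.
move=> hq hdi hin.
set A := Ap q; set B := (1 - 'X : {poly algC}).
set P0 := A ^+ (n - d - i) * B ^+ (i - d).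
have E : forall e : 'I_d.+1, Pk q (n - d) (i - e) = P0 * (A ^+ e * B ^+ (d - e)).
  move=> e; have he : (e <= d)%N by rewrite -ltnS.
  rewrite /Pk -/A -/B /P0.
  have -> : (n - d - (i - e) = (n - d - i) + e)%N by lia.
  have -> : (i - e = (i - d) + (d - e))%N by lia.
  rewrite !exprD; ring.
under eq_bigr => e _ do rewrite E scalerAr.
rewrite -mulr_sumr.
have -> : \sum_(e < d.+1) ('C(d, e)%:R * mq q ^+ (d - e)) *: (A ^+ e * B ^+ (d - e))
          = (mq q *: B + A) ^+ d.
  rewrite exprDn; apply: eq_bigr => e _.
  by rewrite exprZn -scalerAl scalerMnl mulr_natl (mulrC (A ^+ _)).
have -> : mq q *: B + A = (q%:R : algC)%:P.
  rewrite /B /A /Ap qE // -!mul_polyC rmorphD /= polyC1; ring.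
rewrite /Pk -/A -/B.
have -> : (n - d - d - (i - d) = n - d - i)%N by lia.
by rewrite -rmorphXn /= mulrC mul_polyC.
Qed.

Lemma K_gen q n d i j : (1 <= q)%N -> (d <= i)%N -> (i + d <= n)%N ->
  \sum_(e < d.+1) 'C(d, e)%:R * mq q ^+ (d - e) * Kk q (n - d) j (i - e)
  = (q%:R ^+ d) * Kk q (n - d - d) j (i - d).
Proof.
move=> hq hdi hin; rewrite /Kk -coefZ -(Pk_gen hq hdi hin) coef_sum.
by apply: eq_bigr => e _; rewrite coefZ.
Qed.

Lemma TRI q N (x : nat -> algC) s : (1 <= q)%N ->
  (forall j, (j < s)%N -> (j <= N)%N -> \sum_(i < N.+1) Kk q N j i * x i = 0) ->
  forall u, (u < s)%N -> \sum_(i < N.+1) 'C(i, u)%:R * x i = 0.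
Proof.
move=> hq H.
pose X u := \sum_(i < N.+1) 'C(i, u)%:R * x i.
have E : forall j, \sum_(i < N.+1) Kk q N j i * x i = \sum_(u < N.+1) Tk q N j u * X u.
  move=> j; under eq_bigr => i _ do rewrite K_tri // ?(ltnSE (ltn_ord i)) // mulr_suml.
  rewrite exchange_big /=; apply: eq_bigr => u _; rewrite /X mulr_sumr.
  by apply: eq_bigr => i _; ring.
elim/ltn_ind => u IH hu; rewrite -/(X u).
case: (leqP u N) => huN; last first.
  by rewrite /X big1 // => i _; rewrite bin_small ?mul0r //; apply: leq_trans (ltn_ord i) huN.
have := H u hu huN; rewrite E (bigD1 (Ordinal (huN : (u < N.+1)%N))) //= big1.
  rewrite addr0 Tk_diag => /eqP; rewrite mulf_eq0 => /orP [|/eqP //].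
  rewrite expf_eq0 oppr_eq0 pnatr_eq0; lia.
move=> u' hu'; case: (ltnP u' u) => h.
  by rewrite /X (IH u' h (ltn_trans h hu)) mulr0.
rewrite Tk_up ?mul0r //; rewrite ltn_neqAle h andbT.
by apply: contra hu' => /eqP e; apply/eqP/val_inj; rewrite /= e.
Qed.

Lemma CORE_b q N (x : nat -> algC) s : (1 <= q)%N ->
  (forall j, (j < s)%N -> (j <= N)%N -> \sum_(i < N.+1) Kk q N j i * x i = 0) ->
  (#|[set i : 'I_N.+1 | x i != 0%R]| <= s)%N ->
  forall i, (i <= N)%N -> x i = 0.
Proof. by move=> hq H Hc; apply: (SL Hc); apply: TRI H. Qed.

Lemma CORE_a q N (x y : nat -> algC) (c : algC) s : (1 <= q)%N -> c != 0 ->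
  (forall j, (j <= N)%N -> y j = c * \sum_(i < N.+1) Kk q N j i * x i) ->
  (forall i, (i < s)%N -> x i = 0) ->
  (#|[set j : 'I_N.+1 | y j != 0%R]| <= s)%N ->
  forall i, (i <= N)%N -> x i = 0.
Proof.
move=> hq hc Hy Hx Hc.
have Y0 : forall j, (j <= N)%N -> y j = 0.
  apply: (SL Hc) => u hu.
  under eq_bigr => j _ do rewrite Hy ?(ltnSE (ltn_ord j)) // mulr_sumr mulr_sumr.
  rewrite exchange_big /= big1 // => i _.
  case: (ltnP i s) => his; first by rewrite big1 // => j _; rewrite Hx // !mulr0.
  transitivity (c * x i * \sum_(j < N.+1) 'C(j, u)%:R * Kk q N j i).
    by rewrite mulr_sumr; apply: eq_bigr => j _; ring.
  by rewrite (K_mom q (i:=i) (leq_trans hu his) (ltnSE (ltn_ord i))) mulr0.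
apply: (@CORE_b q N x N.+1 hq).
  move=> j _ hj; have := Y0 j hj; rewrite Hy // => /eqP; rewrite mulf_eq0 (negbTE hc) /=.
  by move/eqP.
by apply: leq_trans (max_card _) _; rewrite card_ord.
Qed.

Lemma L1 n (U : {set 'I_n}) (f : 'I_n -> algC) j :
  \sum_(Z : {set 'I_n} | (Z \subset U) && (#|Z| == j)) \prod_(l in Z) f l
  = (\prod_(l in U) (1 + f l *: 'X))`_j.
Proof.
have E : \prod_(l in U) (1 + f l *: 'X) =
         \prod_l ((if l \in U then f l *: 'X else 0) + 1).
  rewrite big_mkcond /=; apply: eq_bigr => l _; case: ifP => _; first by rewrite addrC.
  by rewrite add0r.
rewrite E bigA_distr coef_sum [RHS](bigID (fun Z : {set 'I_n} => Z \subset U)) /=.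
rewrite [X in _ = _ + X]big1 ?addr0; last first.
  move=> Z /subsetPn [l lZ lU].
  by rewrite (bigD1 l) //= lZ (negbTE lU) mul0r coef0.
rewrite [RHS]big_mkcond [LHS]big_mkcond /=; apply: eq_bigr => Z _.
case ZU: (Z \subset U) => //=.
have -> : \prod_i (if i \in Z then (if i \in U then f i *: 'X else 0) else 1)
        = (\prod_(l in Z) f l) *: 'X^#|Z|.
  rewrite -big_mkcond /= (eq_bigr (fun l => f l *: 'X)) => [|l lZ]; last first.
    by rewrite (subsetP ZU l lZ).
  by rewrite scaler_prod prodr_const.
rewrite coefZ coefXn eq_sym; case: (_ == _); by rewrite ?mulr1 ?mulr0.
Qed.

Lemma coef1cX (c : algC) n k : ((1 + c *: 'X) ^+ n)`_k = c ^+ k * 'C(n, k)%:R.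
Proof.
rewrite addrC exprD1n coef_sum.
under eq_bigr => i _ do rewrite coefMn exprZn coefZ coefXn.
case: (ltnP k n.+1) => h.
  rewrite (bigD1 (Ordinal h)) //= eqxx mulr1 big1 ?addr0 => [|i hi]; first by rewrite mulr_natr.
  have hi' : (k == i) = false by apply/eqP => e; move/eqP: hi; apply; apply: val_inj; rewrite /= e.
  by rewrite hi' mulr0 mul0rn.
rewrite bin_small // mulr0 big1 // => i _.
have : (k == i) = false by apply/eqP => e; move: (ltn_ord i); rewrite -e; lia.
by move ->; rewrite mulr0 mul0rn.
Qed.

Lemma Kk_kraw q D j i : Kk q D j i = kraw D q j i.
Proof.
rewrite /Kk /Pk /kraw mulrC coefM.
apply: eq_bigr => h _.
have -> : (1 - 'X : {poly algC}) = 1 + (-1) *: 'X by rewrite scaleN1r.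
rewrite /Ap !coef1cX /mq; ring.
Qed.

Lemma prod_Pk q n (U B : {set 'I_n}) :
  \prod_(l in U) (1 + (if l \in B then -1 else mq q) *: 'X) = Pk q #|U| #|U :&: B|.
Proof.
rewrite (bigID (fun l => l \in B)) /= mulrC /Pk.
have -> : (#|U| - #|U :&: B| = #|U :\: B|)%N.
  by rewrite -(cardsID B U); lia.
congr (_ * _).
  rewrite (eq_bigl (fun l => l \in U :\: B)) => [|l]; last by rewrite !inE andbC.
  by rewrite (eq_bigr (fun _ => Ap q)) ?prodr_const // => l; rewrite inE => /andP [/negbTE -> _].
rewrite (eq_bigl (fun l => l \in U :&: B)) => [|l]; last by rewrite !inE.
by rewrite (eq_bigr (fun _ => 1 - 'X)) ?prodr_const // => l; rewrite inE => /andP [_ ->]; rewrite scaleN1r.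
Qed.

Definition kap q (a b : 'I_q) : algC := if a == b then mq q else -1.
Definition wt D q (C B : {set 'I_D}) : algC := \prod_(l in C) (if l \in B then -1 else mq q).

Lemma kraw_prod D q (u y : word D q) j :
  kraw D q j (hdist u y) = \sum_(Z : {set 'I_D} | #|Z| == j) \prod_(l in Z) kap (u l) (y l).
Proof.
rewrite -Kk_kraw.
have := L1 [set: 'I_D] (fun l => kap (u l) (y l)) j.
rewrite (eq_bigl (fun Z : {set 'I_D} => #|Z| == j)) => [->|Z]; last by rewrite subsetT.
rewrite (eq_bigr (fun l => 1 + (if l \in [set i | u i != y i] then -1 else mq q) *: 'X)).
  by rewrite prod_Pk cardsT card_ord setTI.
by move=> l _; rewrite inE /kap; case: (u l == y l).
Qed.

Lemma sum_kap q (b : 'I_q) (c : 'I_q -> algC) : (1 <= q)%N ->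
  \sum_a kap a b * c a = q%:R * c b - \sum_a c a.
Proof.
move=> hq.
have E : forall a, kap a b * c a = q%:R * ((a == b)%:R * c a) - c a.
  by move=> a; rewrite /kap qE //; case: (a == b) => /=; rewrite ?mul1r ?mul0r; ring.
rewrite (eq_bigr _ (fun a _ => E a)) sumrB -mulr_sumr.
rewrite (bigD1 b) //= eqxx mul1r big1 ?addr0 // => a /negbTE ->; by rewrite mul0r.
Qed.

Lemma sum_kap0 q (b : 'I_q) : (1 <= q)%N -> \sum_a kap a b = 0.
Proof.
move=> hq; have := sum_kap b (fun _ => 1) hq.
by rewrite (eq_bigr (fun a => kap a b)) => [->|a _]; rewrite ?mulr1 // sumr_const card_ord subrr.
Qed.

Lemma wt_kap D q (C : {set 'I_D}) (u : word D q) (a0 : 'I_q) : val a0 = 0%N ->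
  wt q C (wsupp u) = \prod_(l in C) kap (u l) a0.
Proof.
move=> h0; rewrite /wt; apply: eq_bigr => l _; rewrite /kap inE.
have -> : (val (u l) != 0%N) = (u l != a0) by rewrite -h0 (inj_eq val_inj).
by case: (u l == a0).
Qed.

Definition hfac D q (y : word D q) (a0 : 'I_q) (Z C : {set 'I_D}) (l : 'I_D) : algC :=
  if l \in Z then (if l \in C then q%:R * kap (y l) a0 else 0) else (if l \in C then 0 else q%:R).

Lemma hfac_neq D q (y : word D q) a0 (Z C : {set 'I_D}) : Z != C -> \prod_l hfac y a0 Z C l = 0.
Proof.
move=> hZ.
case: (boolP [exists l, (l \in Z) != (l \in C)]) => [/existsP [l hl]|].
  rewrite (bigD1 l) //= /hfac.
  by move: hl; case: (l \in Z); case: (l \in C) => //= _; rewrite mul0r.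
rewrite negb_exists => /forallP H; exfalso; move/eqP: hZ; apply; apply/setP => l.
by have := H l; rewrite negbK => /eqP.
Qed.

Lemma hfac_eq D q (y : word D q) a0 (C : {set 'I_D}) :
  \prod_l hfac y a0 C C l = (q%:R) ^+ D * \prod_(l in C) kap (y l) a0.
Proof.
transitivity (\prod_l (q%:R * (if l \in C then kap (y l) a0 else 1))).
  by apply: eq_bigr => l _; rewrite /hfac; case: (l \in C); rewrite ?mulr1.
rewrite big_split /= -big_mkcond /=; congr (_ * _).
by rewrite prodr_const card_ord.
Qed.

Lemma link_sum D q (y : word D q) (C : {set 'I_D}) j (a0 : 'I_q) : (1 <= q)%N -> val a0 = 0%N ->
  \sum_(u : word D q) kraw D q j (hdist u y) * wt q C (wsupp u)
  = if #|C| == j then (q%:R) ^+ D * wt q C (wsupp y) else 0.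
Proof.
move=> hq h0.
under eq_bigr => u _ do rewrite kraw_prod (wt_kap C u h0) mulr_suml.
rewrite exchange_big /=.
have E : forall Z : {set 'I_D},
  \sum_(u : word D q) (\prod_(l in Z) kap (u l) (y l)) * \prod_(l in C) kap (u l) a0
   = \prod_l hfac y a0 Z C l.
  move=> Z.
  have E1 : forall u : word D q,
     (\prod_(l in Z) kap (u l) (y l)) * \prod_(l in C) kap (u l) a0
       = \prod_l ((if l \in Z then kap (u l) (y l) else 1) * (if l \in C then kap (u l) a0 else 1)).
    by move=> u; rewrite big_split /= -!big_mkcond.
  rewrite (eq_bigr _ (fun u _ => E1 u)).
  rewrite -(bigA_distr_bigA (fun l a => (if l \in Z then kap a (y l) else 1) * (if l \in C then kap a a0 else 1))).
  apply: eq_bigr => l _; rewrite /hfac.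
  case: (l \in Z); case: (l \in C) => /=.
  - by rewrite sum_kap // sum_kap0 // subr0.
  - by under eq_bigr => a _ do rewrite mulr1; rewrite sum_kap0.
  - by under eq_bigr => a _ do rewrite mul1r; rewrite sum_kap0.
  - by under eq_bigr => a _ do rewrite mulr1; rewrite sumr_const card_ord.
rewrite (eq_bigr _ (fun Z _ => E Z)).
rewrite (wt_kap C y h0).
case: ifP => hC.
  rewrite (bigD1 C) //= hfac_eq [X in _ + X]big1 ?addr0 // => Z /andP [_ hZ].
  by rewrite hfac_neq.
rewrite big1 // => Z hZ; rewrite hfac_neq //.
by apply: contraFN hC => /eqP <-.
Qed.

Lemma sigma_set D q (A B : {set 'I_D}) j' :
  \sum_(C : {set 'I_D} | (A \subset C) && (#|C :\: A| == j')) wt q C B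
  = wt q A B * Kk q (D - #|A|) j' #|B :\: A|.
Proof.
rewrite (reindex_onto (fun Z => A :|: Z) (fun C => C :\: A)); last first.
  move=> C /andP [AC _]; apply/setP => l; rewrite !inE.
  by case lA: (l \in A) => //=; rewrite (subsetP AC l lA).
transitivity (\sum_(Z : {set 'I_D} | (Z \subset ~: A) && (#|Z| == j')) wt q (A :|: Z) B).
  apply: eq_bigl => Z; rewrite subsetUl /=.
  case: (boolP (Z \subset ~: A)) => ZA.
    have -> : (A :|: Z) :\: A = Z.
      apply/setP => l; rewrite !inE; case lZ: (l \in Z); rewrite ?orbT ?orbF ?andbT.
        by have := subsetP ZA l lZ; rewrite inE.
      by case: (l \in A).
    by rewrite eqxx andbT.
  apply/negbTE; apply/andP => [[_ /eqP E]]; move/negP: ZA; apply.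
  rewrite -E; apply/subsetP => l; rewrite !inE; by case: (l \in A).
rewrite (eq_bigr (fun Z => wt q A B * wt q Z B)); last first.
  move=> Z /andP [ZA _]; rewrite /wt.
  rewrite (eq_bigl [predU A & Z]) ?bigU //; last by move=> l; rewrite !inE.
  rewrite -setI_eq0 -subset0; apply/subsetP => l; rewrite !inE => /andP [lA lZ].
  by have := subsetP ZA l lZ; rewrite inE lA.
rewrite -mulr_sumr; congr (_ * _).
rewrite /wt (L1 (~: A) (fun l => if l \in B then -1 else mq q)) prod_Pk /Kk.
have -> : #|~: A| = (D - #|A|)%N by have := cardsC A; rewrite card_ord; lia.
by rewrite setIC -setDE.
Qed.

Lemma wt_count D q (A S : {set 'I_D}) :
  wt q A S = (-1) ^+ #|S :&: A| * mq q ^+ (#|A| - #|S :&: A|).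
Proof.
rewrite /wt (bigID (fun l => l \in S)) /=.
have -> : (#|A| - #|S :&: A| = #|A :\: S|)%N by rewrite -(cardsID S A) setIC; lia.
congr (_ * _).
  rewrite (eq_bigl (fun l => l \in S :&: A)) => [|l]; last by rewrite !inE andbC.
  by rewrite (eq_bigr (fun _ => -1)) ?prodr_const // => l; rewrite inE => /andP [-> _].
rewrite (eq_bigl (fun l => l \in A :\: S)) => [|l]; last by rewrite !inE andbC.
by rewrite (eq_bigr (fun _ => mq q)) ?prodr_const // => l; rewrite inE => /andP [/negbTE -> _].
Qed.

Lemma regroup (T : finType) (Y : {set T}) (a b : T -> nat) E I (F : nat -> nat -> algC) :
  (forall y, y \in Y -> (a y < E)%N) -> (forall y, y \in Y -> (b y < I)%N) ->
  \sum_(y in Y) F (a y) (b y)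
  = \sum_(e < E) \sum_(i < I) F e i * #|[set y in Y | (b y == i) && (a y == e)]|%:R.
Proof.
move=> ha hb.
transitivity (\sum_(y in Y) \sum_(e < E) \sum_(i < I)
                (if (b y == i) && (a y == e) then F e i else 0)).
  apply: eq_bigr => y hy.
  rewrite (bigD1 (Ordinal (ha y hy))) //= [X in _ + X]big1 ?addr0; last first.
    move=> e he; apply: big1 => i _.
    have -> : (a y == e) = false.
      by apply/eqP => E1; move/eqP: he; apply; apply: val_inj; rewrite /= E1.
    by rewrite andbF.
  rewrite (bigD1 (Ordinal (hb y hy))) //= !eqxx big1 ?addr0 // => i hi.
  have -> : (b y == i) = false.
    by apply/eqP => E1; move/eqP: hi; apply; apply: val_inj; rewrite /= E1.
  by [].
rewrite exchange_big; apply: eq_bigr => e _; rewrite exchange_big; apply: eq_bigr => i _.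
transitivity (\sum_(y in Y | (b y == i) && (a y == e)) F e i); first by rewrite big_mkcondr.
rewrite (eq_bigl (mem [set y in Y | (b y == i) && (a y == e)])); last by move=> y; rewrite !inE.
by rewrite sumr_const mulr_natr.
Qed.

Definition rho D q (Y : {set word D q}) (A : {set 'I_D}) e i : nat :=
  #|[set y in Y | (hwt y == i) && (#|wsupp y :&: A| == e)]|.

Definition sig D q (Y : {set word D q}) (A : {set 'I_D}) j' : algC :=
  \sum_(C : {set 'I_D} | (A \subset C) && (#|C :\: A| == j')) \sum_(y in Y) wt q C (wsupp y).

Lemma sig_rho D q (Y : {set word D q}) (A : {set 'I_D}) j' :
  sig Y A j' = \sum_(e < #|A|.+1) \sum_(i < D.+1)
     ((-1) ^+ e * mq q ^+ (#|A| - e) * Kk q (D - #|A|) j' (i - e)) * (rho Y A e i)%:R.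
Proof.
rewrite /sig exchange_big /=.
under eq_bigr => y _ do rewrite sigma_set wt_count.
have E : forall y : word D q, #|wsupp y :\: A| = (hwt y - #|wsupp y :&: A|)%N.
  by move=> y; rewrite /hwt -(cardsID A (wsupp y)); lia.
under eq_bigr => y _ do rewrite E.
rewrite (regroup (fun e i => (-1) ^+ e * mq q ^+ (#|A| - e) * Kk q (D - #|A|) j' (i - e))
           (a := fun y => #|wsupp y :&: A|) (b := fun y => hwt y) (E := #|A|.+1) (I := D.+1)).
- by [].
- by move=> y _; rewrite ltnS subset_leq_card // subsetIr.
- by move=> y _; rewrite ltnS /hwt; apply: leq_trans (max_card _) _; rewrite card_ord.
Qed.

Lemma card_del n (S A : {set 'I_n}) e :
  #|[set a in A | #|S :&: (A :\ a)| == e]|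
  = ((#|S :&: A| == e.+1) * e.+1 + (#|S :&: A| == e) * (#|A| - e))%N.
Proof.
set k := #|S :&: A|.
have K : forall a, a \in A -> #|S :&: (A :\ a)| = (k - (a \in S))%N.
  move=> a aA.
  have -> : S :&: (A :\ a) = (S :&: A) :\ a by apply/setP => l; rewrite !inE; case: (l == a); case: (l \in S); case: (l \in A).
  by rewrite /k (cardsD1 a (S :&: A)) inE aA andbT; lia.
case: (eqVneq k e.+1) => hk.
  have -> : (k == e) = false by rewrite hk (gtn_eqF (ltnSn e)).
  rewrite mul1n mul0n addn0 -hk /k; apply: eq_card => a; rewrite !inE.
  case aA: (a \in A); rewrite ?andbF ?andbT //= K //.
  by rewrite hk; case: (a \in S) => /=; [rewrite subn1 /= eqxx | rewrite subn0 (gtn_eqF (ltnSn e))].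
case: (eqVneq k e) => he.
  rewrite mul0n mul1n add0n.
  have -> : (#|A| - e = #|A :\: S|)%N by rewrite -(cardsID S A) setIC -/k he; lia.
  apply: eq_card => a; rewrite !inE andbC.
  case aA: (a \in A); rewrite ?andbF ?andbT //= K //.
  case aS: (a \in S) => /=.
    have : (0 < k)%N by rewrite /k card_gt0; apply/set0Pn; exists a; rewrite inE aS aA.
    by rewrite -he; case: (k) => // k' _; rewrite subn1 /= (ltn_eqF (ltnSn k')).
  by rewrite subn0 he eqxx.
rewrite mul0n add0n; apply/eqP; rewrite cards_eq0; apply/eqP/setP => a; rewrite !inE.
case aA: (a \in A); rewrite ?andbF ?andbT //= K //.
case: (a \in S) => /=; apply/negbTE; move: hk he; lia.
Qed.

Lemma card_sumC (T : finType) (Y : {set T}) (P : pred T) :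
  (#|[set y in Y | P y]|%:R : algC) = \sum_(y in Y) (P y)%:R.
Proof.
transitivity (\sum_(y in [set y in Y | P y]) (1 : algC)); first by rewrite sumr_const.
rewrite (eq_bigl (fun y => (y \in Y) && P y)) => [|y]; last by rewrite inE.
by rewrite big_mkcondr; apply: eq_bigr => y _; case: (P y).
Qed.

Lemma rho_rec D q (Y : {set word D q}) (A : {set 'I_D}) e i :
  \sum_(a in A) (rho Y (A :\ a) e i)%:R
  = e.+1%:R * (rho Y A e.+1 i)%:R + (#|A| - e)%:R * (rho Y A e i)%:R :> algC.
Proof.
rewrite /rho; under eq_bigr => a _ do rewrite card_sumC.
rewrite exchange_big /= !card_sumC !mulr_sumr -big_split /=; apply: eq_bigr => y _.
case: (hwt y == i) => /=; last by rewrite big1 ?mulr0 ?addr0.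
rewrite -(card_sumC A (fun a => #|wsupp y :&: (A :\ a)| == e)) card_del natrD !natrM.
by case: (#|wsupp y :&: A| == e.+1); case: (#|wsupp y :&: A| == e) => /=; ring.
Qed.

Lemma delta_rec (f : nat -> algC) dd :
  (forall e, (e < dd)%N -> e.+1%:R * f e.+1 + (dd - e)%:R * f e = 0) ->
  forall e, (e <= dd)%N -> f e = (-1) ^+ (dd - e) * 'C(dd, e)%:R * f dd.
Proof.
move=> H e he.
have [k hk] : exists k, k = (dd - e)%N by exists (dd - e)%N.
elim: k e he hk => [|k IH] e he hk.
  have -> : e = dd by lia.
  by rewrite subnn binn expr0 !mul1r.
have hed : (e < dd)%N by lia.
have E1 := H e hed.
have E2 := IH e.+1 hed (ltac:(lia)).
have hnz : (dd - e)%:R != 0 :> algC by rewrite pnatr_eq0; lia.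
apply: (mulfI hnz).
have -> : (dd - e)%:R * f e = - (e.+1%:R * f e.+1) by apply/eqP; rewrite -subr_eq0 opprK addrC E1.
rewrite E2.
have hk2 : (dd - e = (dd - e.+1).+1)%N by lia.
have C : (e.+1%:R * 'C(dd, e.+1)%:R = (dd - e)%:R * 'C(dd, e)%:R :> algC).
  by rewrite -!natrM mul_bin_left.
transitivity (- ((-1) ^+ (dd - e.+1) * (e.+1%:R * 'C(dd, e.+1)%:R) * f dd)); first by ring.
rewrite C hk2 exprS; ring.
Qed.

Lemma head_le (P : pred nat) a n j : (a <= j)%N -> (j < a + n)%N -> P j ->
  (head (a + n) [seq i <- iota a n | P i] <= j)%N.
Proof.
elim: n a => [|n IH] a h1 h2 hP; first by lia.
rewrite /= ; case: ifP => Pa /=; first by [].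
have haj : (a < j)%N.
  rewrite ltn_neqAle h1 andbT; apply/eqP => e; by rewrite -e Pa in hP.
by rewrite -addSnnS; apply: IH => //; lia.
Qed.

Lemma head_min (P : pred nat) a n j : (a <= j)%N ->
  (j < head (a + n) [seq i <- iota a n | P i])%N -> ~~ P j.
Proof.
elim: n a => [|n IH] a h1 /=; first by rewrite addn0 => h; lia.
case: ifP => Pa /= h2; first by lia.
case: (eqVneq a j) => [e|ne]; first by rewrite -e Pa.
apply: (IH a.+1); [by rewrite ltn_neqAle ne h1 | by rewrite addSnnS].
Qed.

Lemma shift_sum (G : nat -> algC) D dd : (dd + dd <= D)%N ->
  (forall i, (i < dd)%N -> G i = 0) -> (forall i, (D - dd < i)%N -> G i = 0) ->
  \sum_(i < D.+1) G i = \sum_(i < (D - dd - dd).+1) G (dd + i)%N.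
Proof.
move=> hD h1 h2.
rewrite -(big_mkord xpredT G) -(big_mkord xpredT (fun i => G (dd + i)%N)).
rewrite (big_cat_nat _ (n := dd)) //=; last by lia.
rewrite big_nat_cond big1 ?add0r; last by move=> i /andP [/andP [_ hi] _]; apply: h1.
rewrite (big_cat_nat _ (n := (D - dd).+1)) //=; try lia.
rewrite [X in _ + X]big_nat_cond [X in _ + X]big1 ?addr0; last first.
  by move=> i /andP [/andP [hi _] _]; apply: h2.
rewrite -[X in \sum_(X <= i < _) _](add0n dd) big_addn.
have -> : ((D - dd).+1 - dd = (D - dd - dd).+1)%N by lia.
by apply: eq_bigr => i _; rewrite addnC.
Qed.

Lemma card_X D q : #|[set: word D q]| = (q ^ D)%N.
Proof. by rewrite cardsT card_ffun !card_ord. Qed.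

Lemma hdist_le D q (u w : word D q) : (hdist u w <= D)%N.
Proof. by rewrite /hdist; apply: leq_trans (max_card _) _; rewrite card_ord. Qed.

Lemma hwt_le D q (u : word D q) : (hwt u <= D)%N.
Proof. by rewrite /hwt; apply: leq_trans (max_card _) _; rewrite card_ord. Qed.

Lemma mxv_E D q (Y : {set word D q}) j u :
  mxv (@Eidem D q j) (chiv Y) u
  = (#|[set: word D q]|%:R)^-1 * \sum_(w in Y) kraw D q j (hdist u w).
Proof.
rewrite /mxv /Eidem /chiv mulr_sumr [RHS]big_mkcond /=; apply: eq_bigr => w _.
have hw : (hdist u w < D.+1)%N by rewrite ltnS hdist_le.
rewrite (bigD1 (Ordinal hw)) //= big1 ?addr0.
  by rewrite /assoc eqxx mulr1; case: (w \in Y); rewrite ?mulr1 ?mulr0.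
move=> i hi; rewrite /assoc.
have -> : (hdist u w == i) = false.
  by apply/eqP => e; move/eqP: hi; apply; apply: val_inj; rewrite /= e.
by rewrite mulr0.
Qed.

Lemma nonzeroP D q (v : vec D q) : ~~ nonzero v -> forall u, v u = 0.
Proof. by rewrite /nonzero negb_exists => /forallP H u; have := H u; rewrite negbK => /eqP. Qed.

Lemma G_of_E D q (Y : {set word D q}) j : (1 <= q)%N ->
  ~~ nonzero (mxv (@Eidem D q j) (chiv Y)) ->
  forall C : {set 'I_D}, #|C| = j -> \sum_(y in Y) wt q C (wsupp y) = 0.
Proof.
move=> hq Hn C hC.
pose a0 : 'I_q := Ordinal hq.
have Z := nonzeroP Hn.
have E : \sum_(u : word D q) mxv (@Eidem D q j) (chiv Y) u * wt q C (wsupp u) = 0.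
  by rewrite big1 // => u _; rewrite Z mul0r.
move: E.
under eq_bigr => u _ do rewrite mxv_E -mulrA mulr_suml.
rewrite -mulr_sumr exchange_big /=.
under eq_bigr => w _ do rewrite (link_sum w C j (a0 := a0)) // hC eqxx.
rewrite -mulr_sumr card_X natrX mulrA mulVf ?mul1r //.
by rewrite expf_eq0 pnatr_eq0 negb_and; apply/orP; right; rewrite -lt0n.
Qed.

Lemma hdist0 D q (x y : word D q) : (forall i, val (x i) = 0%N) -> hdist x y = hwt y.
Proof.
move=> hx; rewrite /hdist /hwt /wsupp; apply: eq_card => l; rewrite !inE.
by rewrite -(inj_eq val_inj) hx eq_sym.
Qed.

Lemma Estar_nz D q (x : word D q) (Y : {set word D q}) y :
  (forall i, val (x i) = 0%N) -> y \in Y -> nonzero (mxv (Estar (hwt y) x) (chiv Y)).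
Proof.
move=> hx hy; apply/existsP; exists y.
rewrite /mxv /Estar (bigD1 y) //= eqxx hdist0 // eqxx big1 ?addr0.
  by rewrite /chiv hy mul1r oner_eq0.
by move=> w hw; rewrite eq_sym (negbTE hw) mul0r.
Qed.

Lemma dx_le D q (x : word D q) (Y : {set word D q}) y :
  (forall i, val (x i) = 0%N) -> y \in Y -> (1 <= hwt y)%N -> (delta_x x (chiv Y) <= hwt y)%N.
Proof.
move=> hx hy h1; rewrite /delta_x -add1n; apply: head_le => //.
  by rewrite add1n ltnS hwt_le.
exact: Estar_nz.
Qed.

Lemma ds_min D q (Y : {set word D q}) j :
  (1 <= j)%N -> (j < delta_star (chiv Y))%N -> ~~ nonzero (mxv (@Eidem D q j) (chiv Y)).
Proof.
move=> h1 h2; have := @head_min (fun j => nonzero (mxv (@Eidem D q j) (chiv Y))) 1 D j h1.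
by rewrite add1n; apply; exact: h2.
Qed.

Lemma rho_lt D q (Y : {set word D q}) A e i : (i < e)%N -> rho Y A e i = 0%N.
Proof.
move=> h; apply/eqP; rewrite cards_eq0; apply/eqP/setP => y; rewrite !inE.
case: (y \in Y) => //=; apply/negbTE; rewrite negb_and.
case: (eqVneq (hwt y) i) => //= E; apply/negP => /eqP E2.
have : (#|wsupp y :&: A| <= hwt y)%N by rewrite /hwt subset_leq_card // subsetIl.
rewrite E2 E; lia.
Qed.

Lemma rho_gtA D q (Y : {set word D q}) (A : {set 'I_D}) e i : (#|A| < e)%N -> rho Y A e i = 0%N.
Proof.
move=> h; apply/eqP; rewrite cards_eq0; apply/eqP/setP => y; rewrite !inE.
case: (y \in Y) => //=; apply/negbTE; rewrite negb_and; apply/orP; right.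
have : (#|wsupp y :&: A| <= #|A|)%N by rewrite subset_leq_card // subsetIr.
apply: contraTN => /eqP ->; lia.
Qed.

Lemma rho0_big D q (Y : {set word D q}) (A : {set 'I_D}) i : (D < i + #|A|)%N -> rho Y A 0 i = 0%N.
Proof.
move=> h; apply/eqP; rewrite cards_eq0; apply/eqP/setP => y; rewrite !inE.
case: (y \in Y) => //=; apply/negbTE; rewrite negb_and.
case: (eqVneq (hwt y) i) => //= E; apply/negP; rewrite cards_eq0 => /eqP H.
have : (#|wsupp y| <= #|~: A|)%N.
  apply: subset_leq_card; apply/subsetP => l hl; rewrite inE; apply/negP => hA.
  have hl2 : l \in wsupp y :&: A by rewrite inE hl hA.
  by rewrite H inE in hl2.
have := cardsC A; rewrite card_ord -/(hwt y) E; lia.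
Qed.

Lemma rho_ne0 D q (Y : {set word D q}) A e i : rho Y A e i != 0%N ->
  exists y, y \in Y /\ hwt y = i.
Proof.
rewrite -lt0n card_gt0 => /set0Pn [y]; rewrite !inE => /andP [hy /andP [/eqP h _]].
by exists y.
Qed.

Lemma sig_zero D q (Y : {set word D q}) (A : {set 'I_D}) j' :
  (forall C : {set 'I_D}, #|C| = (#|A| + j')%N -> \sum_(y in Y) wt q C (wsupp y) = 0) ->
  sig Y A j' = 0.
Proof.
move=> H; rewrite /sig big1 // => C /andP [AC /eqP hC]; apply: H.
rewrite -hC -(cardsID A C).
have -> : C :&: A = A by apply/setIidPr.
by [].
Qed.

Lemma sumeq D q (Y : {set word D q}) dd (A A' : {set 'I_D}) :
  (1 <= dd)%N ->
  (forall B B' : {set 'I_D}, #|B| = dd.-1 -> #|B'| = dd.-1 -> forall e i, rho Y B e i = rho Y B' e i) ->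
  #|A| = dd -> #|A'| = dd -> forall e i,
  \sum_(a in A) (rho Y (A :\ a) e i)%:R = \sum_(a in A') (rho Y (A' :\ a) e i)%:R :> algC.
Proof.
move=> hd IH hA hA' e i.
have [a0 a0A] : exists a0, a0 \in A by apply/set0Pn; rewrite -card_gt0 hA.
have hF : #|A :\ a0| = dd.-1 by move: hA; rewrite (cardsD1 a0 A) a0A; lia.
rewrite (eq_bigr (fun _ => (rho Y (A :\ a0) e i)%:R)); last first.
  move=> a aA; congr (_%:R); apply: IH => //; move: hA; rewrite (cardsD1 a A) aA; lia.
rewrite [RHS](eq_bigr (fun _ => (rho Y (A :\ a0) e i)%:R)); last first.
  move=> a aA; congr (_%:R); apply: IH => //; move: hA'; rewrite (cardsD1 a A') aA; lia.
by rewrite !sumr_const hA hA'.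
Qed.

Lemma Dl_rel D q (Y : {set word D q}) dd (A A' : {set 'I_D}) :
  (1 <= dd)%N ->
  (forall B B' : {set 'I_D}, #|B| = dd.-1 -> #|B'| = dd.-1 -> forall e i, rho Y B e i = rho Y B' e i) ->
  #|A| = dd -> #|A'| = dd -> forall i e, (e <= dd)%N ->
  (rho Y A e i)%:R - (rho Y A' e i)%:R
  = (-1) ^+ (dd - e) * 'C(dd, e)%:R * ((rho Y A dd i)%:R - (rho Y A' dd i)%:R) :> algC.
Proof.
move=> hd IH hA hA' i.
apply: (delta_rec (f := fun e => (rho Y A e i)%:R - (rho Y A' e i)%:R)) => e he.
have R := rho_rec Y A e i; have R' := rho_rec Y A' e i.
rewrite hA in R; rewrite hA' in R'.
transitivity (((e.+1%:R * (rho Y A e.+1 i)%:R + (dd - e)%:R * (rho Y A e i)%:R)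
     - (e.+1%:R * (rho Y A' e.+1 i)%:R + (dd - e)%:R * (rho Y A' e i)%:R)) : algC); first by ring.
by rewrite -R -R' (sumeq hd IH hA hA') subrr.
Qed.

Lemma sig_rel D q (Y : {set word D q}) dd (A A' : {set 'I_D}) (X : nat -> algC) :
  (1 <= q)%N -> #|A| = dd -> #|A'| = dd -> (dd + dd <= D)%N ->
  (forall i e, (e <= dd)%N ->
     (rho Y A e i)%:R - (rho Y A' e i)%:R = (-1) ^+ (dd - e) * 'C(dd, e)%:R * X i :> algC) ->
  (forall i, (i < dd)%N -> X i = 0) -> (forall i, (D - dd < i)%N -> X i = 0) ->
  forall j', sig Y A j' - sig Y A' j'
    = (- (q%:R)) ^+ dd * \sum_(i < (D - dd - dd).+1) Kk q (D - dd - dd) j' i * X (dd + i)%N.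
Proof.
move=> hq hA hA' hDD HX Xlo Xhi j'.
rewrite !sig_rho hA hA' -sumrB.
pose G i := X i * ((-1) ^+ dd *
   \sum_(e < dd.+1) 'C(dd, e)%:R * mq q ^+ (dd - e) * Kk q (D - dd) j' (i - e)).
transitivity (\sum_(i < D.+1) G i).
  under eq_bigr => e _ do rewrite -sumrB.
  rewrite exchange_big /=; apply: eq_bigr => i _.
  rewrite /G mulr_sumr mulr_sumr; apply: eq_bigr => e _.
  rewrite -mulrBr HX ?(ltnSE (ltn_ord e)) //.
  have -> : (-1) ^+ dd = (-1) ^+ e * (-1) ^+ (dd - e) :> algC.
    by rewrite -exprD subnKC // (ltnSE (ltn_ord e)).
  ring.
rewrite (shift_sum (G := G) hDD); last 2 first.
- by move=> i hi; rewrite /G Xlo ?mul0r.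
- by move=> i hi; rewrite /G Xhi ?mul0r.
rewrite mulr_sumr; apply: eq_bigr => i _.
have hi : (i <= D - dd - dd)%N by rewrite -ltnS ltn_ord.
rewrite /G K_gen //; [| lia | lia].
have -> : (dd + i - dd = i)%N by lia.
by rewrite [in RHS]exprNn [LHS]mulrC -!mulrA.
Qed.

Lemma card_shift (N D dd : nat) (P Q : pred nat) :
  (dd + N <= D)%N -> (forall j, (j <= N)%N -> P j -> Q (dd + j)%N) ->
  (#|[set j : 'I_N.+1 | P j]| <= #|[set j : 'I_D.+1 | Q j]|)%N.
Proof.
move=> hN H.
pose f := fun j : 'I_N.+1 => (inord (dd + j) : 'I_D.+1).
have hf : forall j : 'I_N.+1, (dd + j < D.+1)%N by move=> j; have := ltn_ord j; lia.
rewrite -(card_in_imset (f := f)); last first.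
  move=> a b _ _ /(congr1 val); rewrite /f /= !inordK // => E; apply: val_inj; rewrite /=; lia.
apply: subset_leq_card; apply/subsetP => z /imsetP [j hj ->].
move: hj; rewrite !inE /f inordK // => hj; apply: H => //; rewrite -ltnS ltn_ord //.
Qed.

Lemma step D q (x : word D q) (Y : {set word D q}) dd :
  (2 <= q)%N -> (forall i, val (x i) = 0%N) -> (1 <= dd)%N ->
  ((#|[set j : 'I_D.+1 | (dd <= j <= D - dd)%N &&
                         nonzero (mxv (@Eidem D q j) (chiv Y))]| + dd
        <= delta_x x (chiv Y))%N
     \/
     (#|[set i : 'I_D.+1 | (dd <= i <= D - dd)%N &&
                         nonzero (mxv (Estar i x) (chiv Y))]| + dd
        <= delta_star (chiv Y))%N) ->
  (forall B B' : {set 'I_D}, #|B| = dd.-1 -> #|B'| = dd.-1 -> forall e i, rho Y B e i = rho Y B' e i) ->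
  forall A A' : {set 'I_D}, #|A| = dd -> #|A'| = dd -> forall e i, rho Y A e i = rho Y A' e i.
Proof.
move=> hq2 hx hd Hyp IH A A' hA hA'.
have hq : (1 <= q)%N by lia.
pose X i := (rho Y A dd i)%:R - (rho Y A' dd i)%:R : algC.
have HX : forall i e, (e <= dd)%N ->
    (rho Y A e i)%:R - (rho Y A' e i)%:R = (-1) ^+ (dd - e) * 'C(dd, e)%:R * X i :> algC.
  by move=> i e he; apply: (Dl_rel hd IH hA hA' i he).
have Xlo : forall i, (i < dd)%N -> X i = 0 by move=> i hi; rewrite /X !rho_lt // subrr.
have Xhi : forall i, (D - dd < i)%N -> X i = 0.
  move=> i hi; have := HX i 0%N (leq0n _).
  rewrite !rho0_big ?hA ?hA'; try lia.
  rewrite subrr subn0 bin0 mulr1 => /esym /eqP; rewrite mulf_eq0 signr_eq0 /= => /eqP //.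
suff Xall : forall i, X i = 0.
  move=> e i; case: (leqP e dd) => he.
    by have := HX i e he; rewrite Xall mulr0 => /eqP; rewrite subr_eq0 eqr_nat => /eqP.
  by rewrite !rho_gtA ?hA ?hA'.
case: (ltnP D (dd + dd)) => h2.
  by move=> i; case: (ltnP i dd) => h; [apply: Xlo | apply: Xhi; lia].
set N := (D - dd - dd)%N.
pose xb i := X (dd + i)%N.
pose yb j := sig Y A j - sig Y A' j.
have Rel : forall j, (j <= N)%N -> yb j = (- (q%:R)) ^+ dd * \sum_(i < N.+1) Kk q N j i * xb i.
  by move=> j _; apply: (sig_rel hq hA hA' h2 HX Xlo Xhi).
have hc : (- (q%:R)) ^+ dd != 0 :> algC by rewrite expf_eq0 oppr_eq0 pnatr_eq0 negb_and; lia.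
have ysig : forall j, ~~ nonzero (mxv (@Eidem D q (dd + j)) (chiv Y)) -> yb j = 0.
  move=> j Hn; rewrite /yb !sig_zero ?subrr // => C hC; apply: (G_of_E hq Hn);
    by rewrite hC ?hA ?hA'.
have xwt : forall i, xb i != 0 -> exists y, y \in Y /\ hwt y = (dd + i)%N.
  move=> i; rewrite /xb /X => H.
  have : (rho Y A dd (dd + i) != 0)%N || (rho Y A' dd (dd + i) != 0)%N.
    apply: contraR H; rewrite negb_or !negbK => /andP [/eqP -> /eqP ->]; by rewrite subrr.
  by case/orP => /rho_ne0.
have Eq0 : forall i, (i <= N)%N -> xb i = 0.
  case: Hyp => [Ha|Hb].
  - apply: (@CORE_a q N xb yb _ (delta_x x (chiv Y) - dd) hq hc Rel).
      move=> i hi; case: (eqVneq (xb i) 0) => // H; exfalso.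
      have [y [hy hw]] := xwt i H.
      have := dx_le hx hy (ltac:(rewrite hw; lia)); rewrite hw; lia.
    apply: leq_trans (@card_shift N D dd (fun j => yb j != 0) (fun j => (dd <= j <= D - dd)%N &&
                         nonzero (mxv (@Eidem D q j) (chiv Y))) _ _) _.
    + rewrite /N; lia.
    + move=> j hj Hy; apply/andP; split; first by rewrite /N in hj; lia.
      by apply: contraR Hy => Hn; rewrite ysig.
    + move: Ha; lia.
  - apply: (@CORE_b q N xb (delta_star (chiv Y) - dd) hq).
      move=> j hj hjN; have : yb j = 0 by apply: ysig; apply: ds_min; lia.
      by rewrite Rel // => /eqP; rewrite mulf_eq0 (negbTE hc) /= => /eqP.
    apply: leq_trans (@card_shift N D dd (fun j => xb j != 0) (fun i => (dd <= i <= D - dd)%N &&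
                         nonzero (mxv (Estar i x) (chiv Y))) _ _) _.
    + rewrite /N; lia.
    + move=> j hj Hy; apply/andP; split; first by rewrite /N in hj; lia.
      have [y [hy hw]] := xwt j Hy; rewrite -hw; exact: Estar_nz.
    + move: Hb; lia.
move=> i; case: (ltnP i dd) => h; first by apply: Xlo.
case: (leqP i (D - dd)) => h'; last by apply: Xhi.
by have := Eq0 (i - dd)%N (ltac:(rewrite /N; lia)); rewrite /xb subnKC.
Qed.

Local Close Scope ring_scope.

Lemma subset_card_eq n (S B : {set 'I_n}) : (S \subset B) = (#|B :&: S| == #|S|).
Proof.
apply/idP/eqP => [/setIidPr -> // | h].
apply/setIidPr/eqP; rewrite eqEcard subsetIr h leqnn //.
Qed.

Unset Implicit Arguments.

Theorem mainTheorem13 (D q : nat) (x : word D q) (Y : {set word D q}) (t : nat) :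
  (1 <= D)%N -> (2 <= q)%N ->
  (forall i, val (x i) = 0%N) ->
  (1 < #|Y|)%N -> (#|Y| < #|[set: word D q]|)%N ->
  (1 <= t <= D)%N ->
  (forall r : nat, (1 <= r <= t)%N ->
     (#|[set j : 'I_D.+1 | (r <= j <= D - r)%N &&
                         nonzero (mxv (@Eidem D q j) (chiv Y))]| + r
        <= delta_x x (chiv Y))%N
     \/
     (#|[set i : 'I_D.+1 | (r <= i <= D - r)%N &&
                         nonzero (mxv (Estar i x) (chiv Y))]| + r
        <= delta_star (chiv Y))%N) ->
  forall k : nat, (k <= D)%N ->
    (forall S S' : {set 'I_D}, #|S| = t -> #|S'| = t ->
       #|[set y in Y | (hwt y == k) && [disjoint wsupp y & S]]| =
       #|[set y in Y | (hwt y == k) && [disjoint wsupp y & S']]|)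
    /\
    (forall S S' : {set 'I_D}, #|S| = t -> #|S'| = t ->
       #|[set y in Y | (hwt y == k) && (S \subset wsupp y)]| =
       #|[set y in Y | (hwt y == k) && (S' \subset wsupp y)]|).
Proof.
move=> hD hq hx hY1 hY2 ht Hr k hk.
have P : forall d, (d <= t)%N -> forall A A' : {set 'I_D}, #|A| = d -> #|A'| = d ->
    forall e i, rho Y A e i = rho Y A' e i.
  elim => [|d IH] hd A A' hA hA' e i.
    have -> : A = set0 by apply/eqP; rewrite -cards_eq0 hA.
    by have -> : A' = set0 by apply/eqP; rewrite -cards_eq0 hA'.
  apply: (step (dd := d.+1) hq hx) => //.
    by apply: Hr; move: ht hd; lia.
  by move=> B B' hB hB'; apply: IH => //; apply: ltnW.
have ht' : (t <= t)%N by [].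
split => S S' hS hS'.
  have E : forall T : {set 'I_D}, #|[set y in Y | (hwt y == k) && [disjoint wsupp y & T]]| = rho Y T 0 k.
    move=> T; apply: eq_card => y; rewrite !inE.
    by rewrite -setI_eq0 cards_eq0.
  by rewrite !E (P t ht' S S' hS hS').
have E : forall T : {set 'I_D}, #|T| = t ->
    #|[set y in Y | (hwt y == k) && (T \subset wsupp y)]| = rho Y T t k.
  move=> T hT; apply: eq_card => y; rewrite !inE.
  by rewrite subset_card_eq hT.
by rewrite !E // (P t ht' S S' hS hS').
Qed.
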